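(* Let $n,d,k$ be integers with $0\le k<d\le n$. The map $T\mapsto\mathfrak{b}(T)$ is a bijection from $\mathcal{T}(n,d,k)$ onto $\mathcal{B}(n,d,k)$, and both sets have cardinality $\binom{n-k-1}{d-k-1}$.
   Context: For a graph $G$, $S(G)$ is obtained by adding a new vertex adjacent to all vertices of $G$, and $D(G)$ by adding a new isolated vertex. For a word $w=w_1\cdots w_n$ over $\{S,D\}$ with $w_n=S$, the threshold graph with word $w$ is $w_1(w_2(\cdots w_n(\emptyset)\cdots))$, $\emptyset$ being the graph with no vertices; every threshold graph arises from exactly one such word. The $b$-vector $\mathfrak{b}(T)=(b_1,\ldots,b_d)$ of a threshold graph $T$ with word $w$ containing $d$ letters $S$: insert a separator right after every $S$ in $w$, cutting $w$ into $d$ consecutive subwords read left to right, and let $b_i$ be the length of the $i$-th subword. A graph is $k$-connected if it has at least $k$ vertices and removing any set of fewer than $k$ vertices leaves a connected graph (every graph is $0$-connected). $\mathcal{T}(n,d,k)$ is the set of $k$-connected threshold graphs on $n$ vertices with clique number $d$. $\mathcal{B}(n,d,k)$ is the set of vectors $(b_1,\ldots,b_d)$ of positive integers with $\sum_i b_i=n$ and $b_1=\cdots=b_k=1$. *)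

(* Defs.v *)
From mathcomp Require Import all_boot.
Set Implicit Arguments. Unset Strict Implicit. Unset Printing Implicit Defensive.

Definition is_clique (V : finType) (e : rel V) (A : {set V}) : bool :=
  [forall x in A, forall y in A, (x != y) ==> e x y].

Definition clique_number (V : finType) (e : rel V) : nat :=
  \max_(A : {set V} | is_clique e A) #|A|.

(* the subgraph induced on U is connected (empty graph counts as connected) *)
Definition induced_connected (V : finType) (e : rel V) (U : {set V}) : bool :=
  [forall x in U, forall y in U,
     connect [rel a b | [&& e a b, a \in U & b \in U]] x y].

Definition k_connected (V : finType) (e : rel V) (k : nat) : bool :=
  (k <= #|V|) &&
  [forall S : {set V}, (#|S| < k) ==> induced_connected e (~: S)].

(* A word w_1 ... w_n over {S,D} is a sequence of booleans, true = S, false = D.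
   Vertex i (0-indexed, i.e. the vertex added by letter w_{i+1}) is adjacent to
   every vertex j > i iff w_{i+1} = S (later letters are applied first). *)
Definition tg_adj (n : nat) (w : n.-tuple bool) : rel 'I_n :=
  fun i j => (i != j) && nth false w (minn i j).

Definition valid_word (n : nat) (w : n.-tuple bool) : bool :=
  last false w.

(* the b-vector: cut after every S, record subword lengths *)
Fixpoint bvec_aux (acc : nat) (w : seq bool) : seq nat :=
  match w with
  | [::] => [::]
  | true :: w' => acc.+1 :: bvec_aux 0 w'
  | false :: w' => bvec_aux acc.+1 w'
  end.

Definition bvec (w : seq bool) : seq nat := bvec_aux 0 w.

(* T(n,d,k), threshold graphs represented by their (unique) words *)
Definition inT (n d k : nat) (w : n.-tuple bool) : bool :=
  [&& valid_word w, k_connected (tg_adj w) k & clique_number (tg_adj w) == d].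

Definition inB (n d k : nat) (b : seq nat) : bool :=
  [&& size b == d, all (fun x => 0 < x) b, sumn b == n &
      all (fun i => nth 0 b i == 1) (iota 0 k)].
Arguments inT : clear implicits.
Arguments inB : clear implicits.

(* Main.v *)
Require Import Defs.
From mathcomp Require Import all_boot zify.
Lemma card_true n (w : n.-tuple bool) : #|[set i : 'I_n | nth false w i]| = count id w.
Proof.
rewrite -sum1_card (eq_bigl (fun i : 'I_n => nth false w i)); last by move=> i; rewrite inE.
rewrite -(big_mkord (fun i => nth false w i) (fun _ => 1)) sum1_count /index_iota subn0.
have H (s : seq bool) : count (nth false s) (iota 0 (size s)) = count id s.
  by rewrite -[in RHS](mkseq_nth false s) /mkseq count_map.
by rewrite -(H w) size_tuple.
Qed.

Lemma minn_cases (a b : nat) : minn a b = a \/ minn a b = b.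
Proof. by rewrite /minn; case: ltnP; [left|right]. Qed.

Lemma last_nth m (w : m.+1.-tuple bool) : last false w = nth false w m.
Proof. by rewrite -nth_last size_tuple. Qed.

Lemma clique_eq m (w : m.+1.-tuple bool) : last false w ->
  clique_number (tg_adj w) = count id w.
Proof.
rewrite last_nth => hl.
apply/eqP; rewrite eqn_leq; apply/andP; split.
- apply/bigmax_leqP => A hA.
  have cl : forall x y, x \in A -> y \in A -> x != y -> tg_adj w x y.
    move=> x y xA yA.
    by move/forallP: hA => /(_ x) /implyP /(_ xA) /forallP /(_ y) /implyP /(_ yA) /implyP.
  rewrite -card_true.
  pose f := fun x : 'I_m.+1 => if nth false w x then x else ord_max.
  have inj : {in A &, injective f}.
    move=> x y xA yA; rewrite /f.
    case hx: (nth false w x); case hy: (nth false w y) => // exy.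
    + have nxy : x != y by apply/eqP => e; rewrite e hy in hx.
      move: (cl _ _ xA yA nxy); rewrite /tg_adj exy /=.
      by rewrite (minn_idPr (leq_ord y)) hy andbF.
    + have nxy : x != y by apply/eqP => e; rewrite e hy in hx.
      move: (cl _ _ xA yA nxy); rewrite /tg_adj -exy /=.
      by rewrite (minn_idPl (leq_ord x)) hx andbF.
    + case: (eqVneq x y) => // nxy.
      move: (cl _ _ xA yA nxy); rewrite /tg_adj nxy /=.
      by case: (minn_cases x y) => [->|->]; rewrite ?hx ?hy.
  rewrite -(card_in_imset inj); apply: subset_leq_card; apply/subsetP => y /imsetP [x xA ->].
  by rewrite inE /f; case: ifP => //.
- rewrite -card_true /clique_number; apply: (leq_bigmax_cond [set i : 'I_m.+1 | nth false w i]).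
  apply/forallP => x; apply/implyP => xS; apply/forallP => y; apply/implyP => yS.
  apply/implyP => nxy; rewrite /tg_adj nxy /=; rewrite inE in xS yS.
  by rewrite !inE in yS; case: (minn_cases x y) => [->|->].
Qed.

Definition Wk (s : seq bool) k := all (fun i => nth false s i) (iota 0 k).

Lemma card_lt m i (h : i <= m) : #|[set j : 'I_m | j < i]| = i.
Proof.
have -> : [set j : 'I_m | j < i] = widen_ord h @: [set: 'I_i].
  apply/setP => j; rewrite inE; apply/idP/imsetP => [ji | [j' _ ->]] //; last by rewrite /= ltn_ord.
  by exists (Ordinal ji) => //; apply: val_inj.
rewrite card_imset; last by move=> a b /(congr1 val) /= e; apply: val_inj.
by rewrite cardsT card_ord.
Qed.

Lemma conn_eq m (w : m.+1.-tuple bool) k : last false w -> k < count id w ->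
  k_connected (tg_adj w) k = Wk w k.
Proof.
rewrite last_nth => hl hk.
have km : k <= m.+1 by apply: leq_trans (ltnW hk) _; rewrite -{2}(size_tuple w) count_size.
rewrite /k_connected card_ord km /=.
apply/forallP/idP.
- move=> H; apply/allP => i; rewrite mem_iota add0n => /andP[_ ik].
  apply/negPn/negP => hi.
  have im : i < m.+1 by apply: leq_trans ik _.
  have H2 := H [set j : 'I_m.+1 | j < i].
  rewrite card_lt ?(ltnW im) // ik /= in H2.
  have xin : Ordinal im \in ~: [set j : 'I_m.+1 | j < i] by rewrite !inE ltnn.
  have yin : (@ord_max m) \in ~: [set j : 'I_m.+1 | j < i].
    by rewrite !inE -leqNgt -ltnS.
  move/forallP: H2 => /(_ (Ordinal im)) /implyP /(_ xin) /forallP /(_ ord_max) /implyP /(_ yin).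
  case/connectP => [[|a p]] /=.
  + move=> _ /(congr1 val) /= ei; move: hi; rewrite -ei; by rewrite hl. 
  + case/andP => /and3P [ha _ ain] _ _.
    move: ha ain; rewrite /tg_adj !inE -leqNgt => /andP [nia hia] ia.
    have ia' : i < a by rewrite ltn_neqAle ia andbT; apply: contra nia => /eqP e; apply/eqP; apply: val_inj.
    by rewrite /= (minn_idPl (ltnW ia')) (negbTE hi) in hia.
- move=> hW S; apply/implyP => hS.
  have : ~~ ([set j : 'I_m.+1 | j < k] \subset S).
    by apply/negP => /subset_leq_card; rewrite card_lt // leqNgt hS.
  case/subsetPn => i0; rewrite inE => i0k i0S.
  have hi : forall i, i < k -> nth false w i by move=> i ik; apply: (allP hW); rewrite mem_iota add0n.
  have hi0 : nth false w i0 by apply: hi.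
  have edge : forall z : 'I_m.+1, z != i0 -> tg_adj w z i0.
    move=> z nz; rewrite /tg_adj nz /=; case: (leqP z i0) => h.
    + by apply: hi; apply: leq_ltn_trans i0k.
    + by [].
  have i0in : i0 \in ~: S by rewrite inE i0S.
  apply/forallP => x; apply/implyP => xS; apply/forallP => y; apply/implyP => yS.
  apply: (connect_trans (y := i0)).
  + case: (eqVneq x i0) => [->|nx]; first exact: connect0.
    by apply: connect1; rewrite /= edge // xS i0in.
  + case: (eqVneq y i0) => [->|ny]; first exact: connect0.
    apply: connect1; rewrite /= yS i0in andbT.
    by move: (edge y ny); rewrite /tg_adj andbT eq_sym minnC.
Qed.
Definition Qk (b : seq nat) k := all (fun i => nth 0 b i == 1) (iota 0 k).

Fixpoint wrd (b : seq nat) : seq bool :=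
  match b with [::] => [::] | x :: b' => nseq x.-1 false ++ true :: wrd b' end.

Lemma bvec_aux_cat acc x b : bvec_aux acc (nseq x false ++ true :: b) = (acc + x).+1 :: bvec_aux 0 b.
Proof. by elim: x acc => [|x IH] acc /=; rewrite ?addn0 // IH addSnnS. Qed.

Lemma bvec_wrd b : all (fun x => 0 < x) b -> bvec (wrd b) = b.
Proof.
elim: b => //= x b IH /andP [hx hb].
by rewrite /bvec bvec_aux_cat add0n prednK // -/(bvec _) IH.
Qed.

Lemma nseq_false_cons acc w : nseq acc false ++ false :: w = false :: nseq acc false ++ w.
Proof. by elim: acc => //= acc ->. Qed.

Lemma wrd_bvec_aux w acc : last false w -> wrd (bvec_aux acc w) = nseq acc false ++ w.
Proof.
elim: w acc => //= a w IH acc; case: a => /=.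
- case: w IH => [|c w] IH hl //=.
  by rewrite IH.
- by move=> hl; rewrite IH // nseq_false_cons.
Qed.

Lemma wrd_bvec w : last false w -> wrd (bvec w) = w.
Proof. exact: wrd_bvec_aux. Qed.

Lemma bvec_pos acc w : all (fun x => 0 < x) (bvec_aux acc w).
Proof. by elim: w acc => //= a w IH acc; case: a => /=; rewrite IH. Qed.

Lemma size_wrd b : all (fun x => 0 < x) b -> size (wrd b) = sumn b.
Proof.
elim: b => //= x b IH /andP [hx hb].
by rewrite size_cat size_nseq /= IH // addnS -addSn prednK.
Qed.

Lemma count_wrd b : count id (wrd b) = size b.
Proof. by elim: b => //= x b IH; rewrite count_cat count_nseq /= IH mul0n. Qed.

Lemma last_wrd_true b : last true (wrd b) = true.
Proof. by elim: b => //= x b IH; rewrite last_cat /=. Qed.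

Lemma last_wrd b : b != [::] -> last false (wrd b) = true.
Proof. by case: b => //= x b _; rewrite last_cat /= last_wrd_true. Qed.

Lemma all_iotaS (P : pred nat) k : all P (iota 0 k.+1) = P 0 && all (fun i => P i.+1) (iota 0 k).
Proof. by rewrite /= -add1n iotaDl all_map. Qed.

Lemma Wk_wrd b k : all (fun x => 0 < x) b -> Wk (wrd b) k = Qk b k.
Proof.
elim: b k => [|x b IH] [|k] //=.
case/andP => hx hb; rewrite /Wk /Qk !all_iotaS.
case: x hx => [|[|x]] //= _.
by have := IH k hb; rewrite /Wk /Qk.
Qed.

Fixpoint bseqs (m r : nat) : seq (seq bool) :=
  match m with
  | 0 => if r is 0 then [:: [::]] else [::]
  | m'.+1 => map (cons false) (bseqs m' r) ++
             (if r is r'.+1 then map (cons true) (bseqs m' r') else [::])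
  end.

Lemma size_bseqs m r : size (bseqs m r) = 'C(m, r).
Proof.
elim: m r => [|m IH] [|r] //=; rewrite size_cat !size_map ?IH //.
by rewrite addn0 !bin0.
Qed.

Lemma mem_cons_map (b : bool) (L : seq (seq bool)) a s :
  (a :: s \in map (cons b) L) = (a == b) && (s \in L).
Proof.
apply/mapP/andP => [[t tL [-> ->]] | [/eqP -> sL]]; first by [].
by exists s.
Qed.

Lemma nil_map (b : bool) (L : seq (seq bool)) : ([::] \in map (cons b) L) = false.
Proof. by apply/mapP => [[t _]]. Qed.

Lemma mem_bseqs m r s : (s \in bseqs m r) = (size s == m) && (count id s == r).
Proof.
elim: m r s => [|m IH] r [|a s].
- by case: r.
- by case: r.
- by rewrite /= mem_cat; case: r => [|r]; rewrite ?orbF !nil_map.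
- rewrite /= mem_cat eqSS; case: r => [|r]; rewrite ?orbF mem_cons_map ?mem_cons_map IH;
  case: a => //=; rewrite ?eqSS ?andbF ?orbF //.
Qed.

Lemma uniq_bseqs m r : uniq (bseqs m r).
Proof.
elim: m r => [|m IH] [|r] //=; rewrite ?cats0 ?map_inj_uniq ?IH //; try by move=> x y [].
rewrite cat_uniq !map_inj_uniq ?IH //=; try by move=> x y [].
rewrite andbT; apply/hasPn => s /mapP [t _ ->]; by rewrite mem_cons_map.
Qed.

Lemma inT_char m d k (w : m.+1.-tuple bool) : k < d ->
  inT m.+1 d k w = [&& last false w, count id w == d & Wk w k].
Proof.
move=> hkd; rewrite /inT /valid_word.
case hl: (last false w) => //=.
rewrite clique_eq //.
case: eqP => [e|_]; last by rewrite andbF.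
by rewrite andbT conn_eq // e.
Qed.

Lemma words_mem m d k (s : seq bool) : k < d -> d <= m.+1 ->
  (s \in [seq nseq k true ++ rcons t true | t <- bseqs (m.+1 - k - 1) (d - k - 1)])
  = (size s == m.+1) && [&& last false s, count id s == d & Wk s k].
Proof.
move=> hkd hdm; apply/mapP/idP.
- case=> t; rewrite mem_bseqs => /andP [/eqP st /eqP ct] ->.
  rewrite size_cat size_nseq size_rcons st last_cat last_rcons.
  rewrite count_cat count_nseq -cats1 count_cat ct /=.
  apply/andP; split; first (apply/eqP; lia).
  apply/andP; split; first (apply/eqP; lia).
  apply/allP => i; rewrite mem_iota add0n => /andP[_ ik].
  by rewrite nth_cat size_nseq ik nth_nseq ik.
- case/and4P => /eqP hsz hl /eqP hc hW.
  have hk : k <= size s by rewrite hsz; lia.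
  have ht : take k s = nseq k true.
    apply: (@eq_from_nth _ false); first by rewrite size_takel // size_nseq.
    move=> i; rewrite size_takel // => ik.
    rewrite nth_take // nth_nseq ik; apply: (allP hW); by rewrite mem_iota add0n.
  have hd : size (drop k s) = m.+1 - k by rewrite size_drop hsz.
  case/lastP E: (drop k s) => [|t y].
    by move: hd; rewrite E /=; lia.
  have es : s = nseq k true ++ rcons t y by rewrite -ht -E cat_take_drop.
  have ey : y = true by move: hl; rewrite es last_cat last_rcons.
  exists t; last by rewrite es ey.
  move: hd hc; rewrite E es size_rcons ey count_cat count_nseq -cats1 count_cat /= => hd hc.
  have h1 : size t = m.+1 - k - 1 by lia.
  have h2 : count id t = d - k - 1 by lia.
  by rewrite mem_bseqs h1 h2 !eqxx.
Qed.

Theorem mainTheorem4 (n d k : nat) (hkd : k < d) (hdn : d <= n) :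
  [/\ {in inT n d k &, injective (fun w : n.-tuple bool => bvec w)},
      (forall w : n.-tuple bool, inT n d k w -> inB n d k (bvec w)),
      (forall b : seq nat, inB n d k b ->
         exists2 w : n.-tuple bool, inT n d k w & bvec w = b),
      #|[set w : n.-tuple bool | inT n d k w]| = 'C(n - k - 1, d - k - 1) &
      exists2 s : seq (seq nat),
        uniq s /\ (forall b, (b \in s) = inB n d k b)
        & size s = 'C(n - k - 1, d - k - 1)].
Proof.
case: n hdn => [|m] hdn; first by case: d hkd hdn.
have P1 : {in inT m.+1 d k &, injective (fun w : m.+1.-tuple bool => bvec w)}.
  move=> w1 w2 h1 h2 /= e; apply: val_inj.
  have h1' : inT m.+1 d k w1 := h1.
  have h2' : inT m.+1 d k w2 := h2.
  rewrite inT_char // in h1'; rewrite inT_char // in h2'.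
  case/and3P: h1' => l1 _ _; case/and3P: h2' => l2 _ _.
  by change (tval w1 = tval w2); rewrite -(wrd_bvec _ l1) e wrd_bvec.
have P2 : forall w : m.+1.-tuple bool, inT m.+1 d k w -> inB m.+1 d k (bvec w).
  move=> w; rewrite inT_char // => /and3P [hl /eqP hc hW].
  have hw := wrd_bvec _ hl.
  have hp := bvec_pos 0 w.
  apply/and4P; split => //.
  - by rewrite -count_wrd hw hc.
  - by rewrite -size_wrd // hw size_tuple.
  - by have := Wk_wrd _ k hp; rewrite hw hW /Qk => <-.
have P3 : forall b : seq nat, inB m.+1 d k b ->
         exists2 w : m.+1.-tuple bool, inT m.+1 d k w & bvec w = b.
  move=> b /and4P [/eqP hs hp /eqP hsum hq].
  have hsz : size (wrd b) == m.+1 by rewrite size_wrd // hsum.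
  exists (Tuple hsz); last by rewrite /= bvec_wrd.
  rewrite inT_char //= last_wrd; last by apply/eqP => e; rewrite e /= in hs; rewrite -hs in hkd.
  by rewrite count_wrd hs eqxx Wk_wrd.
pose A := [set w : m.+1.-tuple bool | inT m.+1 d k w].
have hmem : map val (enum A) =i
    [seq nseq k true ++ rcons t true | t <- bseqs (m.+1 - k - 1) (d - k - 1)].
  move=> x; rewrite words_mem //; apply/mapP/idP.
  - by case=> w; rewrite mem_enum inE inT_char // => hw ->; rewrite size_tuple eqxx.
  - case/andP => hsz hP; exists (Tuple hsz) => //.
    by rewrite mem_enum inE inT_char.
have huniq : uniq [seq nseq k true ++ rcons t true | t <- bseqs (m.+1 - k - 1) (d - k - 1)].
  rewrite map_inj_uniq ?uniq_bseqs //.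
  move=> s1 s2 /eqP; rewrite eqseq_cat // eqxx /= => /eqP e; exact: rcons_injl e.
have P4 : #|A| = 'C(m.+1 - k - 1, d - k - 1).
  rewrite cardE -(size_map val) (perm_size (uniq_perm _ huniq hmem)).
    by rewrite size_map size_bseqs.
  by rewrite map_inj_uniq ?enum_uniq //; exact: val_inj.
split => //.
exists (map bvec (map val (enum A))); last by rewrite !size_map -cardE.
split.
- rewrite map_inj_in_uniq ?map_inj_uniq ?enum_uniq //; first exact: val_inj.
  move=> x y; rewrite !hmem !words_mem // => /andP [_ /and3P [lx _ _]] /andP [_ /and3P [ly _ _]] e.
  by rewrite -(wrd_bvec _ lx) e wrd_bvec.
- move=> b; apply/mapP/idP.
  + case=> x /mapP [w]; rewrite mem_enum inE => hw -> ->; exact: P2.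
  + move=> /P3 [w hw <-]; exists (val w) => //.
    by apply/mapP; exists w => //; rewrite mem_enum inE.
Qed.
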